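(* For each $n=1,2,\dots$ there is a function $f:\{-1,1\}^n\to \{z\in\mathbb{C}:\ |z|=1\}$ with \[ I(f)<1 \qquad\text{and}\qquad H(|\hat f|^2)>\frac{n}{n+1}\log n. \]
   Context: Equip $\{-1,1\}^n$ with the uniform (normalized counting) probability measure. Let $\varepsilon_i:\{-1,1\}^n\to\{-1,1\}$ be the $i$-th coordinate projection, and for $A\subseteq[n]=\{1,\dots,n\}$ let $W_A=\prod_{i\in A}\varepsilon_i$. For $g:\{-1,1\}^n\to\mathbb{C}$, the Fourier–Walsh coefficients are $\hat g(A)=2^{-n}\sum_{\delta\in\{-1,1\}^n} g(\delta)W_A(\delta)$, so $g=\sum_{A\subseteq[n]}\hat g(A)W_A$. The influence is $I(g)=\sum_{A\subseteq[n]}|\hat g(A)|^2|A|$, and the Fourier entropy is $H(|\hat g|^2)=-\sum_{A\subseteq[n]}|\hat g(A)|^2\log|\hat g(A)|^2$ with $0\log 0=0$. Logarithms are to base $2$. *)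

(* Defs.v *)
From HB Require Import structures.
From mathcomp Require Import all_boot all_order all_algebra.
From mathcomp Require Import reals exp.
From mathcomp Require Import complex.
Set Implicit Arguments. Unset Strict Implicit. Unset Printing Implicit Defensive.
Import Order.TTheory GRing.Theory Num.Theory.
Local Open Scope ring_scope.

(* The cube {-1,1}^n is encoded as 'I_n -> bool: coordinate i of delta is
   -1 if delta i = true and +1 if delta i = false. *)
Definition cube (n : nat) := {ffun 'I_n -> bool}.

Section Fourier.
Variable R : realType.
Variable n : nat.

Definition eps (i : 'I_n) (d : cube n) : R[i] := if d i then -1 else 1.

Definition walsh (A : {set 'I_n}) (d : cube n) : R[i] := \prod_(i in A) eps i d.

Definition fhat (g : cube n -> R[i]) (A : {set 'I_n}) : R[i] :=
  (2 ^+ n)^-1 * \sum_(d : cube n) g d * walsh A d.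

(* |hat g(A)|^2, as a real number: the modulus `|z| in R[i] is real, we take
   its real part to land in R *)
Definition fsq (g : cube n -> R[i]) (A : {set 'I_n}) : R := complex.Re (`|fhat g A| ^+ 2).

Definition influence (g : cube n -> R[i]) : R :=
  \sum_(A : {set 'I_n}) fsq g A * #|A|%:R.

End Fourier.

Definition log2 (R : realType) (x : R) : R := ln x / ln 2.

Definition fentropy (R : realType) (n : nat) (g : cube n -> R[i]) : R :=
  - \sum_(A : {set 'I_n})
      (if fsq g A == 0 then 0 else fsq g A * log2 (fsq g A)).

(* Main.v *)
Require Import Defs.
From HB Require Import structures.
From mathcomp Require Import all_boot all_order all_algebra.
From mathcomp Require Import reals exp.
From mathcomp Require Import complex.
From mathcomp Require Import ring lra.
Import Order.TTheory GRing.Theory Num.Theory.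
Local Open Scope ring_scope.

Lemma my_sum_set_prod (R : comNzRingType) (I : finType) (w : I -> bool -> R) :
  \sum_(A : {set I}) \prod_i w i (i \in A) = \prod_i (w i true + w i false).
Proof.
rewrite [RHS](eq_bigr (fun i => \sum_(b : bool) w i b)); last by move=> i _; rewrite big_bool.
rewrite bigA_distr_bigA /=.
rewrite (reindex (fun f : {ffun I -> bool} => [set i | f i])) /=.
  by apply: eq_bigr => f _; apply: eq_bigr => i _; rewrite inE.
exists (fun A : {set I} => [ffun i => i \in A]) => [f _|A _].
  by apply/ffunP => i; rewrite ffunE inE.
by apply/setP => i; rewrite inE ffunE.
Qed.

Lemma my_key (R : comNzRingType) (I : finType) (j : I) (q h : bool -> R) :
  q true + q false = 1 ->
  \sum_(A : {set I}) (\prod_i q (i \in A)) * h (j \in A)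
  = q true * h true + q false * h false.
Proof.
move=> hq.
transitivity (\sum_(A : {set I}) \prod_i
   (if i == j then q (i \in A) * h (i \in A) else q (i \in A))).
  apply: eq_bigr => A _.
  rewrite (bigD1 j) //= [RHS](bigD1 j) //= eqxx mulrAC; congr (_ * _).
  by apply: eq_bigr => i /negbTE ->.
rewrite (@my_sum_set_prod _ _ (fun i b => if i == j then q b * h b else q b)) (bigD1 j) //= eqxx big1 ?mulr1 // => i /negbTE ->; done.
Qed.

Lemma my_card_sum (I : finType) (R : comNzRingType) (A : {set I}) :
  #|A|%:R = \sum_j (if j \in A then 1 else 0) :> R.
Proof.
by rewrite -big_mkcond /= sumr_const.
Qed.

Lemma my_ln_prod (R : realType) (I : finType) (F : I -> R) :
  (forall i, 0 < F i) -> 0 < \prod_i F i /\ ln (\prod_i F i) = \sum_i ln (F i).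
Proof.
move=> hF.
apply: (big_rec2 (fun x y => 0 < x /\ ln x = y)).
  by rewrite ln1.
move=> i x y _ [hx <-]; split; first by rewrite mulr_gt0.
by rewrite lnM // posrE.
Qed.

Section Main.
Variable R : realType.
Variable n : nat.
Hypothesis n0 : (0 < n)%N.
Let Q : R := (n.+1%:R)^-1.
Let P : R := n%:R / n.+1%:R.
Let a := Num.sqrt P.
Let s := Num.sqrt Q.
Let u : R[i] := Complex a s.
Let v : R[i] := Complex a (- s).
Let c (b : bool) : R[i] := if b then Complex 0 s else Complex a 0.
Let q (b : bool) : R := if b then Q else P.
Let f (d : cube n) : R[i] := \prod_i (if d i then v else u).

Lemma n1_ne0 : (n.+1%:R : R) != 0. Proof. by rewrite pnatr_eq0. Qed.
Lemma PQ : P + Q = 1.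
Proof. rewrite /P /Q -addn1 natrD; have := n1_ne0; rewrite -addn1 natrD => h; field. done. Qed.
Lemma Q0 : 0 < Q. Proof. by rewrite /Q invr_gt0 ltr0n. Qed.
Lemma P0 : 0 < P. Proof. by rewrite /P divr_gt0 // ltr0n. Qed.

Lemma fhatE A : fhat f A = \prod_i c (i \in A).
Proof.
rewrite /fhat.
transitivity ((2 ^+ n)^-1 * \sum_(d : cube n) \prod_i
   ((if d i then v else u) * (if i \in A then (if d i then -1 else 1) else 1))).
  congr (_ * _); apply: eq_bigr => d _.
  by rewrite big_split /= /walsh big_mkcond.
rewrite -(bigA_distr_bigA (fun i b => (if b then v else u) *
   (if i \in A then (if b then -1 else 1) else 1))) /=.
have -> : ((2 : R[i]) ^+ n)^-1 = \prod_(i < n) (2^-1 : R[i]).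
  by rewrite prodr_const card_ord exprVn.
rewrite -big_split /=.
apply: eq_bigr => i _; rewrite big_bool /=.
case: (i \in A); rewrite /c /u /v.
  have -> : (a -i* s)%C * -1 + (a +i* s)%C * 1 = 2 * (s*i)%C.
    by apply/eqP; rewrite eq_complex /=; apply/andP; split; apply/eqP; ring.
  by rewrite mulKf // pnatr_eq0.
have -> : (a -i* s)%C * 1 + (a +i* s)%C * 1 = 2 * (a +i* 0)%C.
  by apply/eqP; rewrite eq_complex /=; apply/andP; split; apply/eqP; ring.
by rewrite mulKf // pnatr_eq0.
Qed.


Lemma fsqE A : fsq f A = \prod_i q (i \in A).
Proof.
rewrite /fsq fhatE normr_prod -prodrXl.
rewrite (eq_bigr (fun i => (q (i \in A))%:C%C)); last first.
  move=> i _; rewrite -add_Re2_Im2 /c /q; case: (i \in A) => /=;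
  rewrite expr0n /= ?add0r ?addr0 sqr_sqrtr //; apply: ltW; [exact: Q0|exact: P0].
by rewrite -rmorph_prod.
Qed.

Lemma qPQ : q true + q false = 1. Proof. by rewrite /q addrC PQ. Qed.

Lemma unit_f d : `|f d| = 1.
Proof.
rewrite /f normr_prod big1 // => i _.
have h w : w = u \/ w = v -> `|w| = 1.
  move=> hw; apply/eqP; rewrite -sqrp_eq1 // -add_Re2_Im2.
  case: hw => -> /=; rewrite ?sqrrN !sqr_sqrtr ?(ltW Q0) ?(ltW P0) // PQ //.
by case: (d i); apply: h; auto.
Qed.

Lemma infl : influence f = n%:R * Q.
Proof.
rewrite /influence.
under eq_bigr => A _ do rewrite fsqE (@my_card_sum _ R A) mulr_sumr.
rewrite exchange_big /=.
under eq_bigr => j _ do rewrite (@my_key _ _ j q (fun b => if b then 1 else 0) qPQ).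
by rewrite sumr_const card_ord /q mulr1 mulr0 addr0 mulr_natl.
Qed.

Lemma q0 b : 0 < q b. Proof. by case: b; [exact: Q0|exact: P0]. Qed.

Lemma ent : fentropy f = - (n%:R * (Q * (ln Q / ln 2) + P * (ln P / ln 2))).
Proof.
rewrite /fentropy; congr (- _).
under eq_bigr => A _ do rewrite fsqE.
transitivity (\sum_(A : {set 'I_n}) \sum_j
   (\prod_i q (i \in A)) * ((fun b => ln (q b) / ln 2) (j \in A))).
  apply: eq_bigr => A _.
  have [hp hl] := @my_ln_prod R _ (fun i => q (i \in A)) (fun i => q0 _).
  rewrite (negbTE (lt0r_neq0 hp)) -mulr_sumr /log2 hl mulr_suml.
  done.
rewrite exchange_big /=.
under eq_bigr => j _ do rewrite (@my_key _ _ j q (fun b => ln (q b) / ln 2) qPQ).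
by rewrite sumr_const card_ord mulr_natl.
Qed.

Lemma final_ineq : n%:R / (n.+1)%:R * log2 (n%:R : R) <
   - (n%:R * (Q * (ln Q / ln 2) + P * (ln P / ln 2))).
Proof.
have hn : (0 : R) < n%:R by rewrite ltr0n.
have hn1 : (0 : R) < n.+1%:R by rewrite ltr0n.
have l2 : (0 : R) < ln 2 by rewrite ln_gt0 // ltr1n.
have lQ : ln Q = - ln (n.+1%:R : R) by rewrite /Q lnV // posrE.
have lP : ln P = ln (n%:R : R) - ln (n.+1%:R : R) by rewrite /P ln_div // posrE.
have lt : ln (n%:R : R) < ln (n.+1%:R : R) by rewrite ltr_ln ?posrE // ltr_nat.
rewrite lQ lP /Q /P /log2.
move: hn hn1 lt; rewrite -addn1 natrD.
set k := (n%:R : R) => hk hk1 hL.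
set L0 := ln k. set L1 := ln (k + 1%:R). set l := ln (2 : R).
have e : - (k * ((k + 1%:R)^-1 * (- L1 / l) + k / (k + 1%:R) * ((L0 - L1) / l)))
   = k / (k + 1%:R) * (L0 / l) + k * (L1 - L0) / l.
  by field; rewrite (lt0r_neq0 l2) (lt0r_neq0 hk1).
rewrite e ltrDl divr_gt0 // mulr_gt0 // subr_gt0 //.
Qed.

Lemma infl_lt : n%:R * Q < 1.
Proof. by rewrite /Q ltr_pdivrMr ?ltr0n // mul1r ltr_nat. Qed.
End Main.

Theorem theorem2 (R : realType) (n : nat) : (0 < n)%N ->
  exists f : cube n -> R[i],
    (forall d : cube n, `|f d| = 1) /\
    influence f < 1 /\
    fentropy f > n%:R / (n.+1)%:R * log2 (n%:R : R).
Proof.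
move=> n0; eexists; split; first exact: unit_f.
split; first by rewrite infl //; exact: infl_lt.
rewrite ent //; exact: final_ineq.
Qed.
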